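(* Let $(a_n)_{n\ge1}$ be the sequence defined by $a_1=1$ and $a_n = a_{n-1}\left(1-\frac{a_{n-1}}{n}\right)$ for $n\ge 2$. Then $\frac{1}{a_n}\sim \log n$, i.e. $\lim_{n\to\infty} \frac{1/a_n}{\log n}=1$.
   Context: $\log$ denotes the natural logarithm. The sequence $(a_n)$ is defined by the recurrence $a_1=1$, $a_n=a_{n-1}(1-a_{n-1}/n)$ for $n\ge2$. *)

(* Defs.v *)
From Stdlib Require Import Reals.
From Coquelicot Require Import Coquelicot.
Open Scope R_scope.

(* a n for n >= 1: a 1 = 1, a n = a (n-1) * (1 - a (n-1) / n) for n >= 2.
   The value at index 0 is a junk value (set to 1) and is never used by
   the recurrence for n >= 1 or by the limit statement. *)
Fixpoint a (n : nat) : R :=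
  match n with
  | O => 1
  | S O => 1
  | S (S k as m) => a m * (1 - a m / INR (S m))
  end.

(* Main.v *)
Require Import Defs.
From Stdlib Require Import Reals Lra Lia.
From Coquelicot Require Import Coquelicot.
Open Scope R_scope.

Lemma ln_le_m1 : forall y, 0 < y -> ln y <= y - 1.
Proof. intros y Hy. pose proof (exp_ineq1_le (ln y)). rewrite exp_ln in H; lra. Qed.

Lemma INR_S_pos : forall k, 0 < INR (S k).
Proof. intros; apply lt_0_INR; lia. Qed.

Lemma a_bounds : forall k, 0 < a (S k) <= 1.
Proof.
  induction k as [|k IH]. simpl; lra.
  change (a (S (S k))) with (a (S k) * (1 - a (S k) / INR (S (S k)))).
  assert (HN : 1 <= INR (S (S k))) by (rewrite S_INR; pose proof (pos_INR (S k)); lra).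
  assert (H1 : a (S k) / INR (S (S k)) <= 1 / 1).
  { apply Rmult_le_compat; try lra. left; apply Rinv_0_lt_compat; lra.
    apply Rinv_le_contravar; lra. }
  assert (H2 : 0 <= a (S k) / INR (S (S k))).
  { apply Rmult_le_pos; try lra. left; apply Rinv_0_lt_compat; lra. }
  assert (H3 : a (S k) / INR (S (S k)) < 1).
  { apply (Rmult_lt_reg_r (INR (S (S k)))); try lra. unfold Rdiv.
    rewrite Rmult_assoc, Rinv_l by lra. assert (1 < INR (S (S k))).
    { rewrite S_INR; pose proof (INR_S_pos k); lra. } nra. }
  split; nra.
Qed.

Lemma a_rec : forall k,
  / a (S (S k)) = / a (S k) + / (INR (S (S k)) - a (S k)).
Proof.
  intro k. change (a (S (S k))) with (a (S k) * (1 - a (S k) / INR (S (S k)))).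
  pose proof (a_bounds k).
  assert (1 < INR (S (S k))) by (rewrite S_INR; pose proof (INR_S_pos k); lra).
  field; repeat split; try lra.
Qed.

Lemma lower : forall k, ln (INR (S k) + 1) <= / a (S k).
Proof.
  induction k as [|k IH]. simpl. pose proof (ln_le_m1 2). rewrite Rinv_1. replace (1+1) with 2 by ring. lra.
  rewrite a_rec. pose proof (a_bounds k).
  set (N := INR (S (S k))).
  assert (HN : INR (S k) + 1 = N) by (unfold N; rewrite (S_INR (S k)); auto).
  rewrite HN in IH.
  assert (1 < N) by (unfold N; rewrite S_INR; pose proof (INR_S_pos k); lra).
  replace (N + 1) with (N * ((N + 1) / N)) by (field; lra).
  rewrite ln_mult by (try apply Rdiv_lt_0_compat; lra).
  pose proof (ln_le_m1 ((N+1)/N)) as L.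
  assert (0 < (N+1)/N) by (apply Rdiv_lt_0_compat; lra).
  specialize (L H1).
  replace ((N+1)/N - 1) with (/N) in L by (field; lra).
  assert (/ N <= / (N - a (S k))) by (apply Rinv_le_contravar; lra).
  lra.
Qed.

Lemma upper : forall k, / a (S (S k)) <= 2 + ln (INR (S k)).
Proof.
  induction k as [|k IH].
  - rewrite a_rec. simpl (INR 1). rewrite ln_1. simpl. lra.
  - rewrite a_rec. pose proof (a_bounds (S k)).
    set (M := INR (S k)) in *.
    assert (HM : INR (S (S k)) = M + 1) by (unfold M; apply S_INR).
    assert (HN : INR (S (S (S k))) = M + 2) by (rewrite S_INR, HM; lra).
    rewrite HM, HN. assert (0 < M) by apply INR_S_pos.
    assert (/ (M + 2 - a (S (S k))) <= / (M + 1)) by (apply Rinv_le_contravar; lra).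
    pose proof (ln_le_m1 (M / (M + 1))) as L.
    assert (HMp : 0 < M/(M+1)) by (apply Rdiv_lt_0_compat; lra).
    specialize (L HMp).
    replace (M / (M+1) - 1) with (- / (M+1)) in L by (field; lra).
    assert (E : ln M = ln (M+1) + ln (M/(M+1))).
    { rewrite <- ln_mult by lra. f_equal. field. lra. }
    lra.
Qed.

Theorem mainTheorem3 :
  is_lim_seq (fun n : nat => (/ a n) / ln (INR n)) 1.
Proof.
  assert (Hln : is_lim_seq (fun n => ln (INR n)) p_infty).
  { apply (is_lim_comp_seq (fun y => ln y) INR p_infty p_infty).
    apply is_lim_ln_p. exists 0%nat; intros; discriminate. apply is_lim_seq_INR. }
  apply is_lim_seq_le_le_loc with (u := fun _ => 1) (w := fun n => 1 + 2 * / ln (INR n)).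
  - exists 3%nat. intros n Hn. destruct n as [|[|[|k]]]; try lia.
    pose proof (lower (S (S k))) as Lo. pose proof (upper (S k)) as Up.
    set (N := INR (S (S (S k)))) in *.
    assert (HN : INR (S (S k)) = N - 1) by (unfold N; rewrite (S_INR (S (S k))); lra).
    assert (2 < N) by (unfold N; rewrite S_INR, S_INR; pose proof (INR_S_pos k); lra).
    rewrite HN in Up.
    assert (0 < ln N).
    { rewrite <- ln_1. apply ln_increasing; lra. }
    assert (ln N <= ln (N + 1)) by (left; apply ln_increasing; lra).
    assert (ln (N - 1) <= ln N) by (left; apply ln_increasing; lra).
    split.
    + apply (Rmult_le_reg_r (ln N)); auto. unfold Rdiv. rewrite Rmult_assoc, Rinv_l by lra. lra.
    + apply (Rmult_le_reg_r (ln N)); auto. unfold Rdiv. rewrite Rmult_assoc, Rinv_l by lra.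
      rewrite Rmult_plus_distr_r, Rmult_assoc, Rinv_l by lra. lra.
  - apply is_lim_seq_const.
  - assert (H0 : is_lim_seq (fun n => / ln (INR n)) 0).
    { replace (Finite 0) with (Rbar_inv p_infty) by reflexivity.
      apply is_lim_seq_inv; auto. discriminate. }
    assert (H2 : is_lim_seq (fun n => 2 * / ln (INR n)) (Rbar_mult 2 0)) by (apply is_lim_seq_scal_l; auto).
    simpl in H2. rewrite Rmult_0_r in H2.
    pose proof (is_lim_seq_plus' _ _ 1 0 (is_lim_seq_const 1) H2) as H3.
    rewrite Rplus_0_r in H3. exact H3.
Qed.
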